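(* Let $\mathcal{D}$ be a clocked basic action theory and let $K\in\mathbb{N}$ be at least as large as every natural-number constant mentioned in $\mathcal{D}$. Then the relation $\approx_{\mathcal{D}K}$ on situations is a time-abstract bisimulation.
   Context: Situation calculus setting: sorts action, situation, object and time (the real numbers); $S_0$ initial situation; $\mathit{do}(a,s)$ the successor situation; $\phi[\sigma]$ is $\phi$ with $s$ replaced by $\sigma$; $\mathcal{S}$ denotes the set of ground situations. Fluents are relation or function symbols with last argument a situation and other arguments objects; there are finitely many fluents, finitely many action types and a finite set $\mathcal{O}$ of object constants (with unique names and domain closure). A formula is uniform in $s$ if it mentions no situation term other than $s$ and does not mention $\mathit{Poss}$. A basic action theory (BAT) is $\mathcal{D} = \mathcal{D}_0 \cup \mathcal{D}_{poss} \cup \mathcal{D}_{ssa} \cup \mathcal{D}_{ca} \cup \mathcal{D}_{co} \cup \Sigma$: initial description (uniform in $S_0$, complete information), precondition axioms, successor state axioms, domain closure and unique name axioms for actions and objects, and foundational axioms. A clock comparison is a formula $f(\vec x,s)\bowtie v$ or $v\bowtie v'$ with $f$ a functional fluent, $v,v'\in\mathbb{N}$, $\bowtie\in\{<,\leq,=,\geq,>\}$. A formula is clocked if every atomic subformula mentioning a term of sort time is a clock comparison; time-independent if it mentions no term of sort time. A BAT is clocked if there is a distinguished action type $\mathit{wait}(t)$ (other action types have no time argument) and: every functional fluent takes values of sort time; $\mathcal{D}_0$ sets every functional fluent to $0$ at $S_0$; every functional fluent $f$ has successor state axiom $f(\vec o,\mathit{do}(a,s))=y \equiv \exists t\,(a=\mathit{wait}(t)\wedge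 y=f(\vec o,s)+t) \vee (\neg\exists t\, a=\mathit{wait}(t)) \wedge (\phi_f(\vec o,a,s)\wedge y=0 \vee \neg\phi_f(\vec o,a,s)\wedge y=f(\vec o,s))$ with $\phi_f$ time-independent and uniform in $s$; relational fluents have successor state axioms $R(\vec o,\mathit{do}(a,s))\equiv\phi_R(\vec o,a,s)$ with $\phi_R$ clocked and uniform in $s$; precondition axioms have clocked right-hand sides uniform in $s$; $\mathit{Poss}(\mathit{wait}(t),s)\equiv\top$. Functional fluents are clocks; $\mathcal{C}$ is the set of ground situation-suppressed clock terms; $\nu_\sigma:\mathcal{C}\to\mathbb{R}_{\geq0}$ is given by $\nu_\sigma(\omega)=\tau$ iff $\mathcal{D}\models\omega[\sigma]=\tau$. Regions: for $u,v\in\mathbb{R}_{\geq0}$, $u\sim_K v$ iff either $u>K$ and $v>K$, or $u,v\leq K$ with $\lfloor u\rfloor=\lfloor v\rfloor$ and $\lceil u\rceil=\lceil v\rceil$; $\mathrm{fract}(v)=v-\lfloor v\rfloor$ if $v\leq K$ and $0$ otherwise. $\sigma_1\approx_{\mathcal{D}K}\sigma_2$ iff (1) for every relational fluent $R$ and ground object tuple $\vec\rho$, $\mathcal{D}\models R(\vec\rho,\sigma_1)$ iff $\mathcal{D}\models R(\vec\rho,\sigma_2)$; and (2) for every $\omega\in\mathcal{C}$, $\nu_{\sigma_1}(\omega)\sim_K\nu_{\sigma_2}(\omega)$, and for all $\omega,\omega'\in\mathcal{C}$, $\mathrm{fract}(\nu_{\sigma_1}(\omega))\leq\mathrm{fract}(\nu_{\sigma_1}(\omega'))$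 iff $\mathrm{fract}(\nu_{\sigma_2}(\omega))\leq\mathrm{fract}(\nu_{\sigma_2}(\omega'))$. An equivalence relation $R\subseteq\mathcal{S}\times\mathcal{S}$ is a time-abstract bisimulation if $(\sigma_1,\sigma_2)\in R$ implies: (1) for every clocked formula $\phi$ uniform in $s$ whose natural-number constants are $\leq K$, $\mathcal{D}\models\phi[\sigma_1]$ iff $\mathcal{D}\models\phi[\sigma_2]$; (2) for every action type $A\neq\mathit{wait}$ and ground argument tuple $\vec\rho$, $(\mathit{do}(A(\vec\rho),\sigma_1),\mathit{do}(A(\vec\rho),\sigma_2))\in R$; (3) for every $\tau_1\in\mathbb{R}_{\geq0}$ there is $\tau_2\in\mathbb{R}_{\geq0}$ with $(\mathit{do}(\mathit{wait}(\tau_1),\sigma_1),\mathit{do}(\mathit{wait}(\tau_2),\sigma_2))\in R$. *)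

(* Defs.v *)
From HB Require Import structures.
From mathcomp Require Import all_boot all_order all_algebra.
From mathcomp Require Import reals Rstruct.
From Stdlib Require Reals.

Set Implicit Arguments.
Unset Strict Implicit.
Unset Printing Implicit Defensive.

Import Order.TTheory GRing.Theory Num.Theory.

Definition time : realType := Rdefinitions.R.
Local Open Scope ring_scope.

(*  - Obj : the finite set O of object constants (unique names +       *)
(*          domain closure: the object domain is exactly Obj).         *)
(*  - CF  : functional fluents (= clocks), with object arity car;      *)
(*          their values are of sort time.                             *)
(*  - AT  : the action types other than wait, with object arity aar    *)
(*          (they have no time argument); wait(t) is built in.         *)
Record signature := Signature {
  Obj : finType;
  RF : finType; rar : RF -> nat;
  CF : finType; car : CF -> nat;
  AT : finType; aar : AT -> nat }.

Section Syntax.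
Variable sg : signature.

(* Ground actions: wait(t) for t of sort time, or A(o1,...,on).  By the
   domain-closure and unique-name axioms for actions, these are exactly
   the elements of the action domain. *)
Inductive gaction : Type :=
| GWait : time -> gaction
| GAct : forall A : AT sg, {ffun 'I_(aar A) -> Obj sg} -> gaction.

Inductive sit : Type :=
| S0 : sit
| Do : gaction -> sit -> sit.

(* Ground situations (the set S): all wait arguments are non-negative
   reals (so that clock values lie in R_{>=0}, cf. nu_sigma). *)
Fixpoint ground_sit (s : sit) : Prop :=
  match s with
  | S0 => True
  | Do (GWait t) s' => (0 <= t) /\ ground_sit s'
  | Do (GAct _ _) s' => ground_sit s'
  end.

Inductive cmp := CLt | CLe | CEq | CGe | CGt.

Definition cmpR (c : cmp) (x y : time) : Prop :=
  match c with
  | CLt => (x < y)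
  | CLe => (x <= y)
  | CEq => x = y
  | CGe => (x >= y)
  | CGt => (x > y)
  end.

(* Object terms with n free object variables (de Bruijn indices). *)
Inductive oterm (n : nat) : Type :=
| OVar : 'I_n -> oterm n
| OCst : Obj sg -> oterm n.

(* Action terms without time arguments (a term wait(t) would mention a
   term of sort time, which is not allowed in clocked/time-independent
   formulas outside clock comparisons). *)
Inductive aterm (n m : nat) : Type :=
| AVar : 'I_m -> aterm n m
| AApp : forall A : AT sg, ('I_(aar A) -> oterm n) -> aterm n m.

(* Clocked formulas uniform in s (the situation argument s is implicit;
   Poss is not available), with n free object variables and m free action
   variables.  The only atoms mentioning terms of sort time are clock
   comparisons f(x,s) ~ v and v ~ v' with v, v' natural numbers.
   Other connectives/quantifiers are definable. *)
Inductive form : nat -> nat -> Type :=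
| FTrue n m : form n m
| FNot n m : form n m -> form n m
| FAnd n m : form n m -> form n m -> form n m
| FExO n m : form n.+1 m -> form n m
| FExA n m : form n m.+1 -> form n m
| FEqO n m : oterm n -> oterm n -> form n m
| FEqA n m : aterm n m -> aterm n m -> form n m
| FRel n m (r : RF sg) : ('I_(rar r) -> oterm n) -> form n m
| FClk n m (f : CF sg) : ('I_(car f) -> oterm n) -> cmp -> nat -> form n m
| FNum n m : cmp -> nat -> nat -> form n m.

Fixpoint time_indep n m (phi : form n m) : bool :=
  match phi with
  | FTrue _ _ => true
  | FNot _ _ p => time_indep p
  | FAnd _ _ p q => time_indep p && time_indep q
  | FExO _ _ p => time_indep p
  | FExA _ _ p => time_indep p
  | FEqO _ _ _ _ => true
  | FEqA _ _ _ _ => true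
  | FRel _ _ _ _ => true
  | FClk _ _ _ _ _ _ => false
  | FNum _ _ _ _ _ => false
  end.

Fixpoint consts_le (K : nat) n m (phi : form n m) : bool :=
  match phi with
  | FTrue _ _ => true
  | FNot _ _ p => consts_le K p
  | FAnd _ _ p q => consts_le K p && consts_le K q
  | FExO _ _ p => consts_le K p
  | FExA _ _ p => consts_le K p
  | FEqO _ _ _ _ => true
  | FEqA _ _ _ _ => true
  | FRel _ _ _ _ => true
  | FClk _ _ _ _ _ v => (v <= K)%N
  | FNum _ _ _ v v' => (v <= K)%N && (v' <= K)%N
  end.

(* Interpretations of the fluents and of Poss over the standard domains
   (objects = Obj, actions = gaction, situations = sit, time = R). *)
Record model := Model {
  Rint : forall r : RF sg, {ffun 'I_(rar r) -> Obj sg} -> sit -> Prop;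
  Cint : forall f : CF sg, {ffun 'I_(car f) -> Obj sg} -> sit -> time;
  Pint : gaction -> sit -> Prop }.

Definition ext_env (T : Type) n (e : 'I_n -> T) (x : T) : 'I_n.+1 -> T :=
  fun i => match unlift ord0 i with Some j => e j | None => x end.

Definition eval_ot n (eo : 'I_n -> Obj sg) (t : oterm n) : Obj sg :=
  match t with OVar i => eo i | OCst o => o end.

Definition eval_at n m (eo : 'I_n -> Obj sg) (ea : 'I_m -> gaction)
  (t : aterm n m) : gaction :=
  match t with
  | AVar j => ea j
  | AApp A args => GAct [ffun i => eval_ot eo (args i)]
  end.

Fixpoint eval (M : model) (s : sit) n m (phi : form n m)
  : ('I_n -> Obj sg) -> ('I_m -> gaction) -> Prop :=
  match phi with
  | FTrue _ _ => fun _ _ => True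
  | FNot _ _ p => fun eo ea => ~ eval M s p eo ea
  | FAnd _ _ p q => fun eo ea => eval M s p eo ea /\ eval M s q eo ea
  | FExO _ _ p => fun eo ea => exists o, eval M s p (ext_env eo o) ea
  | FExA _ _ p => fun eo ea => exists a, eval M s p eo (ext_env ea a)
  | FEqO _ _ t t' => fun eo ea => eval_ot eo t = eval_ot eo t'
  | FEqA _ _ t t' => fun eo ea => eval_at eo ea t = eval_at eo ea t'
  | FRel _ _ r args => fun eo ea => Rint M [ffun i => eval_ot eo (args i)] s
  | FClk _ _ f args c v => fun eo ea =>
      cmpR c (Cint M [ffun i => eval_ot eo (args i)] s) (v%:R)
  | FNum _ _ c v v' => fun eo ea => cmpR c (v%:R) (v'%:R)
  end.

Definition env0 (T : Type) : 'I_0 -> T.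
Proof. by case. Defined.

Record BAT := MkBAT {
  (* D_0: complete initial description; relational fluents as given by
     init, every clock equal to 0 at S0 *)
  init : forall r : RF sg, {ffun 'I_(rar r) -> Obj sg} -> bool;
  (* D_poss: Poss(A(x),s) == pi_A(x,s), clocked, uniform in s *)
  poss : forall A : AT sg, form (aar A) 0;
  (* D_ssa for relational fluents: R(x,do(a,s)) == phi_R(x,a,s) *)
  ssaR : forall r : RF sg, form (rar r) 1;
  (* D_ssa for clocks: phi_f(x,a,s), time-independent *)
  ssaC : forall f : CF sg, form (car f) 1;
  ssaC_ti : forall f, time_indep (ssaC f) }.

Variable D : BAT.

(* M satisfies D_0, D_poss and D_ssa (the remaining axioms D_ca, D_co and
   Sigma are built into the choice of the standard domains). *)
Definition is_model (M : model) : Prop :=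
  (forall r (o : {ffun 'I_(rar r) -> Obj sg}), Rint M o S0 <-> init D o) /\
  (forall f o, Cint M (f := f) o S0 = 0) /\
  (forall A (o : {ffun 'I_(aar A) -> Obj sg}) s,
      Pint M (GAct o) s <-> eval M s (poss D A) (fun i => o i) (@env0 _)) /\
  (forall t s, Pint M (GWait t) s) /\
  (forall r (o : {ffun 'I_(rar r) -> Obj sg}) a s,
      Rint M o (Do a s) <-> eval M s (ssaR D r) (fun i => o i) (fun _ => a)) /\
  (forall f (o : {ffun 'I_(car f) -> Obj sg}) a s,
      (forall t, a = GWait t -> Cint M o (Do a s) = (Cint M o s + t)) /\
      ((forall t, a <> GWait t) ->
         (eval M s (ssaC D f) (fun i => o i) (fun _ => a) ->
            Cint M o (Do a s) = 0) /\
         (~ eval M s (ssaC D f) (fun i => o i) (fun _ => a) ->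
            Cint M o (Do a s) = Cint M o s))).

Definition entails (s : sit) (phi : form 0 0) : Prop :=
  forall M, is_model M -> eval M s phi (@env0 _) (@env0 _).

(* K bounds every natural-number constant mentioned in D (the constant 0
   of D_0 and of the clock axioms is trivially bounded). *)
Definition bat_consts_le (K : nat) : Prop :=
  (forall A, consts_le K (poss D A)) /\
  (forall r, consts_le K (ssaR D r)) /\
  (forall f, consts_le K (ssaC D f)).

(* Ground clock terms omega = f(rho), and nu_sigma(omega) = tau iff
   D |= omega[sigma] = tau. *)
Definition clock_term := {f : CF sg & {ffun 'I_(car f) -> Obj sg}}.

Definition nu (s : sit) (w : clock_term) (tau : time) : Prop :=
  forall M, is_model M -> Cint M (projT2 w) s = tau.

Definition simK (K : nat) (u v : time) : Prop :=
  ((u > K%:R) /\ (v > K%:R)) \/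
  ((u <= K%:R) /\ (v <= K%:R) /\
   Num.floor u = Num.floor v /\ Num.ceil u = Num.ceil v).

Definition fract (K : nat) (v : time) : time :=
  if (v <= K%:R) then (v - (Num.floor v)%:~R) else 0.

Definition approx (K : nat) (s1 s2 : sit) : Prop :=
  ground_sit s1 /\ ground_sit s2 /\
  (forall r (rho : {ffun 'I_(rar r) -> Obj sg}),
      entails s1 (@FRel 0 0 r (fun i => OCst 0 (rho i))) <->
      entails s2 (@FRel 0 0 r (fun i => OCst 0 (rho i)))) /\
  (forall w t1 t2, nu s1 w t1 -> nu s2 w t2 -> simK K t1 t2) /\
  (forall w w' t1 t1' t2 t2',
      nu s1 w t1 -> nu s1 w' t1' -> nu s2 w t2 -> nu s2 w' t2' ->
      ((fract K t1 <= fract K t1') <-> (fract K t2 <= fract K t2'))).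

Definition time_abstract_bisim (K : nat) (Rel : sit -> sit -> Prop) : Prop :=
  (forall s1 s2, Rel s1 s2 -> ground_sit s1 /\ ground_sit s2) /\
  (forall s, ground_sit s -> Rel s s) /\
  (forall s1 s2, Rel s1 s2 -> Rel s2 s1) /\
  (forall s1 s2 s3, Rel s1 s2 -> Rel s2 s3 -> Rel s1 s3) /\
  (forall s1 s2, Rel s1 s2 ->
     (forall phi : form 0 0, consts_le K phi ->
        (entails s1 phi <-> entails s2 phi)) /\
     (forall A (rho : {ffun 'I_(aar A) -> Obj sg}),
        Rel (Do (GAct rho) s1) (Do (GAct rho) s2)) /\
     (forall t1 : time, (0 <= t1) ->
        exists t2 : time, (0 <= t2) /\
          Rel (Do (GWait t1) s1) (Do (GWait t2) s2))).

End Syntax.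

(* Main.v *)
Require Import Defs.
From HB Require Import structures.
From mathcomp Require Import all_boot all_order all_algebra.
From mathcomp Require Import reals Rstruct.
From mathcomp Require Import ring lra zify.
From Stdlib Require Import Classical ClassicalEpsilon.
Set Implicit Arguments.
Unset Strict Implicit.
Unset Printing Implicit Defensive.
Import Order.TTheory GRing.Theory Num.Theory Num.Def.
Local Open Scope ring_scope.
Definition IIK (K : nat) (u v : time) : Prop :=
  forall k : int, k%:~R <= K%:R :> time ->
    (u < k%:~R <-> v < k%:~R) /\ (k%:~R < u <-> k%:~R < v).

Lemma natRz (K : nat) : K%:R = (K%:Z)%:~R :> time.
Proof. by rewrite -pmulrn. Qed.

Lemma IIK_K K u v : IIK K u v -> (K%:R < u <-> K%:R < v).
Proof. move=> H; have := H (K%:Z); rewrite -natRz => /(_ (lexx _)) [_ h]; exact h. Qed.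

Lemma IIK_le K u v : IIK K u v -> (u <= K%:R <-> v <= K%:R).
Proof.
move=> /IIK_K h; rewrite !leNgt; split => /negP a; apply/negP => b; apply: a; by apply/h.
Qed.

Lemma IIK_floor K u v : IIK K u v -> u <= K%:R -> floor u = floor v.
Proof.
move=> H hu; have hv : v <= K%:R by apply/(IIK_le H).
have fu : (floor u)%:~R <= K%:R :> time by apply: le_trans (floor_le _) hu.
have fv : (floor v)%:~R <= K%:R :> time by apply: le_trans (floor_le _) hv.
apply/eqP; rewrite eq_le; apply/andP; split.
- rewrite floor_ge_int leNgt; apply/negP => /(proj2 (proj1 (H _ fu))).
  by rewrite ltNge floor_le.
- rewrite floor_ge_int leNgt; apply/negP => /(proj1 (proj1 (H _ fv))).
  by rewrite ltNge floor_le.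
Qed.

Lemma IIK_ceil K u v : IIK K u v -> u <= K%:R -> ceil u = ceil v.
Proof.
move=> H hu; have hv : v <= K%:R by apply/(IIK_le H).
have fu : (ceil u)%:~R <= K%:R :> time by rewrite natRz ler_int ceil_le_int -natRz.
have fv : (ceil v)%:~R <= K%:R :> time by rewrite natRz ler_int ceil_le_int -natRz.
apply/eqP; rewrite eq_le; apply/andP; split.
- rewrite ceil_le_int leNgt; apply/negP => /(proj1 (proj2 (H _ fv))).
  by rewrite ltNge (proj2 (andP (ceil_itv _))).
- rewrite ceil_le_int leNgt; apply/negP => /(proj2 (proj2 (H _ fu))).
  by rewrite ltNge (proj2 (andP (ceil_itv _))).
Qed.

Lemma simK_IIK K u v : simK K u v <-> IIK K u v.
Proof.
split.
- case=> [[hu hv]|[hu [hv [hf hc]]]] k hk.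
  + split; split=> h; lra.
  + split.
    * by rewrite -!floor_lt_int hf.
    * by rewrite -!ceil_gt_int hc.
- move=> H.
  case: (ltrP (K%:R) u) => hu.
  + by left; split=> //; apply/(IIK_K H).
  + right; split => //; split; first by apply/(IIK_le H).
    split; [exact: IIK_floor H hu | exact: IIK_ceil H hu].
Qed.

Lemma fract_ge0 K u : 0 <= fract K u.
Proof. rewrite /fract; case: ifP => _ //; have := floor_le u; lra. Qed.

Lemma fract_lt1 K u : fract K u < 1.
Proof. rewrite /fract; case: ifP => _ //; have := floorD1_gt u; rewrite intrD; lra. Qed.

Lemma fract_zero K u v : IIK K u v -> (fract K u = 0 <-> fract K v = 0).
Proof.
move=> H; rewrite /fract.
case: (ltrP (K%:R) u) => hu.
- have hv : K%:R < v by apply/(IIK_K H).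
  by rewrite /= ifF //; apply/negbTE; rewrite -ltNge.
- have hv : v <= K%:R by apply/(IIK_le H).
  rewrite hv /= -(IIK_floor H hu).
  have fu : (floor u)%:~R <= K%:R :> time by apply: le_trans (floor_le _) hu.
  have [[a1 a2] [b1 b2]] := H _ fu.
  split=> h.
  + case: (ltrgtP v (floor u)%:~R) => hv'.
    * have := a2 hv'; lra.
    * have := b2 hv'; lra.
    * lra.
  + case: (ltrgtP u (floor u)%:~R) => hu'.
    * have := a1 hu'; lra.
    * have := b1 hu'; lra.
    * lra.
Qed.

Lemma pq_int (p q : time) : 0 <= p -> p < 2 -> 0 <= q -> q < 2 ->
  (p < 1 <-> q < 1) -> (p = 1 <-> q = 1) -> (p = 0 <-> q = 0) ->
  forall m k : int, (m%:~R + p < k%:~R <-> m%:~R + q < k%:~R) /\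
                    (k%:~R < m%:~R + p <-> k%:~R < m%:~R + q).
Proof.
move=> p0 p2 q0 q2 h1 he1 he0 m k.
have e : k%:~R = m%:~R + (k - m)%:~R :> time by rewrite -intrD; congr (_%:~R); ring.
rewrite e !ltrD2l; move: (k - m) => j.
have : (j <= -1 \/ j = 0 \/ j = 1 \/ 2 <= j)%R by lia.
case=> [hj|[->|[->|hj]]].
- have hj' : j%:~R <= -1 :> time.
    by have := hj; rewrite -(ler_int time) => /le_trans; apply; rewrite mulrN1z.
  by split; split=> h; lra.
- by rewrite mulr0z; split; split=> h; lra.
- by rewrite mulr1z; split; split=> h; lra.
- have hj' : 2 <= j%:~R :> time.
    by have := hj; rewrite -(ler_int time); apply: le_trans; rewrite mulrz_nat.
  by split; split=> h; lra.
Qed.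

Lemma fin_max (C : finType) (P : pred C) (h : C -> time) (b : time) :
  exists M, b <= M /\ (forall c, P c -> h c <= M) /\
            (M = b \/ exists c, P c /\ M = h c).
Proof.
suff: forall s : seq C, exists M, b <= M /\ (forall c, c \in s -> P c -> h c <= M) /\
            (M = b \/ exists c, P c /\ M = h c).
  case/(_ (enum C)) => M [h1 [h2 h3]]; exists M; split=> //; split=> // c.
  by apply: h2; rewrite mem_enum.
elim=> [|c s [M [h1 [h2 h3]]]]; first by exists b; split=> //; split=> //; left.
case Pc: (P c); last first.
  exists M; split=>//; split=> // c'; rewrite inE => /orP [/eqP -> | ]; [by rewrite Pc | exact: h2].
case: (leP M (h c)) => hM.
- exists (h c); split; first exact: le_trans hM. split; last by right; exists c.
  move=> c'; rewrite inE => /orP [/eqP -> // | hc' Pc']; exact: le_trans (h2 _ hc' Pc') hM.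
- exists M; split=>//; split=> // c'; rewrite inE => /orP [/eqP -> _| ]; [exact: ltW | exact: h2].
Qed.

Lemma cell (C : finType) (B : pred C) (f g : C -> time) (d : time) :
  (forall c, B c -> 0 <= f c /\ f c < 1) -> (forall c, B c -> 0 <= g c /\ g c < 1) ->
  (forall c, B c -> (f c = 0 <-> g c = 0)) ->
  (forall c c', B c -> B c' -> (f c <= f c' <-> g c <= g c')) ->
  0 <= d -> d < 1 ->
  exists d', 0 <= d' /\ d' < 1 /\ (d = 0 <-> d' = 0) /\
    forall c, B c -> (f c + d < 1 <-> g c + d' < 1) /\ (f c + d = 1 <-> g c + d' = 1).
Proof.
move=> hf hg hz ho d0 d1.
have hlt : forall c c', B c -> B c' -> (f c < f c' <-> g c < g c').
  move=> c c' Bc Bc'; split=> h; rewrite ltNge; apply/negP => h'.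
  - by have := proj2 (ho c' c Bc' Bc) h'; rewrite leNgt h.
  - by have := proj1 (ho c' c Bc' Bc) h'; rewrite leNgt h.
case: (eqVneq d 0) => [->|dn0].
  exists 0; split=> //; split=> //; split=> // c Bc.
  by have := hf c Bc; have := hg c Bc; split; split=> h; lra.
have dp : 0 < d by rewrite lt0r dn0.
case: (classic (exists c0, B c0 /\ f c0 + d = 1)) => [[c0 [Bc0 e0]]|nex].
- have g0 : 0 < g c0.
    have := hg c0 Bc0; case=> a _; rewrite lt0r a andbT; apply/eqP => /(proj2 (hz _ Bc0)); lra.
  have := hg c0 Bc0 => -[_ g1].
  exists (1 - g c0); split; first lra. split; first lra. split; first by split=> h; lra.
  move=> c Bc; have := hlt c c0 Bc Bc0; have := ho c c0 Bc Bc0; have := ho c0 c Bc0 Bc.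
  by split; split=> h; lra.
- have [lo [lo0 [loH loE]]] := fin_max [pred c | B c && (1 < f c + d)] (fun c => 1 - g c) 0.
  have [M2 [M20 [M2H M2E]]] := fin_max [pred c | B c && (f c + d < 1)] (fun c => g c - 1) (-1).
  have lohi : lo < - M2.
    case: loE => [->|[c [/andP [Bc hc] ->]]]; case: M2E => [->|[c' [/andP [Bc' hc'] ->]]].
    + lra.
    + have := hg c' Bc'; lra.
    + have : 0 < g c.
        have := hg c Bc; case=> a _; rewrite lt0r a andbT; apply/eqP => /(proj2 (hz _ Bc)).
        have := hf c Bc; lra.
      lra.
    + have : f c' < f c by lra.
      by move/(hlt _ _ Bc' Bc); lra.
  exists ((lo + - M2) / 2); split; first lra. split.
    case: M2E => [->|[c' [/andP [Bc' hc'] ->]]]; first lra. have := hg c' Bc'; lra.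
  split; first by split=> h; lra.
  move=> c Bc.
  have hne : f c + d != 1 by apply/eqP => e; apply: nex; exists c.
  case: (ltrgtP (f c + d) 1) => hc.
  + have := M2H c; rewrite /= Bc hc => /(_ isT) => h.
    by split; split=> h'; lra.
  + have := loH c; rewrite /= Bc hc => /(_ isT) => h.
    by split; split=> h'; lra.
  + by rewrite hc eqxx in hne.
Qed.

Lemma fract_shift K (m : int) (p : time) : 0 <= p -> p < 2 -> m%:~R + p <= K%:R ->
  fract K (m%:~R + p) = if p < 1 then p else p - 1.
Proof.
move=> p0 p2 hK; rewrite /fract hK; case: ltrP => hp.
- have -> : floor (m%:~R + p) = m by apply: floor_def; rewrite intrD mulr1z; apply/andP; split; lra.
  lra.
- have -> : floor (m%:~R + p) = m + 1.
    by apply: floor_def; rewrite !intrD mulr1z; apply/andP; split; lra.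
  rewrite intrD mulr1z; lra.
Qed.

Lemma region_wait (C : finType) K (x y : C -> time) (t1 : time) :
  (forall c, IIK K (x c) (y c)) ->
  (forall c c', fract K (x c) <= fract K (x c') <-> fract K (y c) <= fract K (y c')) ->
  0 <= t1 ->
  exists t2, 0 <= t2 /\ (forall c, IIK K (x c + t1) (y c + t2)) /\
   (forall c c', fract K (x c + t1) <= fract K (x c' + t1) <->
                 fract K (y c + t2) <= fract K (y c' + t2)).
Proof.
move=> HS HF t0.
pose n := floor t1; pose d := t1 - n%:~R.
have d0 : 0 <= d by have := floor_le t1; rewrite /d; lra.
have d1 : d < 1 by have := floorD1_gt t1; rewrite /d intrD mulr1z; lra.
have n0 : 0 <= n%:~R :> time by rewrite ler0z floor_ge0.
pose B := fun c => x c <= K%:R.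
pose f := fun c => x c - (floor (x c))%:~R.
pose g := fun c => y c - (floor (y c))%:~R.
have fb : forall c, 0 <= f c /\ f c < 1.
  by move=> c; have := floor_le (x c); have := floorD1_gt (x c); rewrite /f intrD mulr1z; split; lra.
have gb : forall c, 0 <= g c /\ g c < 1.
  by move=> c; have := floor_le (y c); have := floorD1_gt (y c); rewrite /g intrD mulr1z; split; lra.
have Byc : forall c, B c -> y c <= K%:R by move=> c Bc; apply/(IIK_le (HS c)).
have fxE : forall c, B c -> fract K (x c) = f c.
  by move=> c Bc; have Bc' : x c <= K%:R := Bc; rewrite /fract Bc'.
have fyE : forall c, B c -> fract K (y c) = g c.
  by move=> c Bc; rewrite /fract Byc.
have [d' [d'0 [d'1 [dd' Hc]]]] : exists d', 0 <= d' /\ d' < 1 /\ (d = 0 <-> d' = 0) /\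
    forall c, B c -> (f c + d < 1 <-> g c + d' < 1) /\ (f c + d = 1 <-> g c + d' = 1).
  apply: (cell (B := B)) => //.
  - move=> c Bc; rewrite -fxE // -fyE //; exact: fract_zero (HS c).
  - by move=> c c' Bc Bc'; rewrite -!fxE // -!fyE //.
pose t2 := n%:~R + d'.
have t20 : 0 <= t2 by rewrite /t2; lra.
have NIIK : forall c, IIK K (x c + t1) (y c + t2).
  move=> c; case Bc: (B c).
  - have ex : x c + t1 = (floor (x c) + n)%:~R + (f c + d) by rewrite intrD /f /d; ring.
    have ey : y c + t2 = (floor (x c) + n)%:~R + (g c + d').
      by rewrite intrD /g /t2 (IIK_floor (HS c) Bc); ring.
    rewrite ex ey => k _.
    have [hc1 hc2] := Hc c Bc.
    have := fb c; have := gb c => -[g0 g1] [f0 f1].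
    apply: pq_int; try lra.
    split=> h.
    + have hf0 : fract K (x c) = 0 by rewrite fxE //; lra.
      have := proj1 (fract_zero (HS c)) hf0; rewrite fyE // => hg.
      have hd : d = 0 by lra.
      have := proj1 dd' hd; lra.
    + have hf0 : fract K (y c) = 0 by rewrite fyE //; lra.
      have := proj2 (fract_zero (HS c)) hf0; rewrite fxE // => hg.
      have hd : d' = 0 by lra.
      have := proj2 dd' hd; lra.
  - have hx : K%:R < x c by rewrite ltNge; apply/negP => h; rewrite /B h in Bc.
    have hy : K%:R < y c by apply/(IIK_K (HS c)).
    move=> k hk; split; split=> h; lra.
exists t2; split=> //; split=> // c c'.
have hxy : forall c, x c + t1 <= K%:R -> B c by move=> c0 h; rewrite /B; lra.
case: (ltrP (K%:R) (x c' + t1)) => hc'.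
  have hc'' : K%:R < y c' + t2 by apply/(IIK_K (NIIK c')).
  have e1 : fract K (x c' + t1) = 0 by rewrite /fract ifF //; apply/negbTE; rewrite -ltNge.
  have e2 : fract K (y c' + t2) = 0 by rewrite /fract ifF //; apply/negbTE; rewrite -ltNge.
  rewrite e1 e2.
  have := fract_ge0 K (x c + t1); have := fract_ge0 K (y c + t2).
  have := fract_zero (NIIK c) => h1 h2 h3; split=> h; lra.
case: (ltrP (K%:R) (x c + t1)) => hc.
  have hc'' : K%:R < y c + t2 by apply/(IIK_K (NIIK c)).
  have e1 : fract K (x c + t1) = 0 by rewrite /fract ifF //; apply/negbTE; rewrite -ltNge.
  have e2 : fract K (y c + t2) = 0 by rewrite /fract ifF //; apply/negbTE; rewrite -ltNge.
  rewrite e1 e2.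
  have := fract_ge0 K (x c' + t1); have := fract_ge0 K (y c' + t2).
  split=> _; lra.
have Bc := hxy _ hc; have Bc' := hxy _ hc'.
have hyc : y c + t2 <= K%:R by apply/(IIK_le (NIIK c)).
have hyc' : y c' + t2 <= K%:R by apply/(IIK_le (NIIK c')).
have ex : forall c, B c -> x c + t1 = (floor (x c) + n)%:~R + (f c + d).
  by move=> c0 _; rewrite intrD /f /d; ring.
have ey : forall c, B c -> y c + t2 = (floor (x c) + n)%:~R + (g c + d').
  by move=> c0 Bc0; rewrite intrD /g /t2 (IIK_floor (HS c0) Bc0); ring.
move: hc hc' hyc hyc'; rewrite (ex c Bc) (ex c' Bc') (ey c Bc) (ey c' Bc') => hc hc' hyc hyc'.
have := fb c; have := gb c => -[g0 g1] [f0 f1].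
have := fb c'; have := gb c' => -[g0' g1'] [f0' f1'].
rewrite !fract_shift; try lra.
have [hc1 _] := Hc c Bc; have [hc1' _] := Hc c' Bc'.
have Ho := HF c c'; rewrite fxE // fxE // fyE // fyE // in Ho.
case: (ltrP (f c + d) 1) => p1; case: (ltrP (f c' + d) 1) => p1';
  case: (ltrP (g c + d') 1) => q1; case: (ltrP (g c' + d') 1) => q1'; lra.
Qed.

Definition state (sg : signature) :=
  ((forall r : RF sg, {ffun 'I_(rar r) -> Obj sg} -> Prop) *
   (forall f : CF sg, {ffun 'I_(car f) -> Obj sg} -> time))%type.

Definition mstate sg (st : state sg) : model sg :=
  Model (fun r o _ => st.1 r o) (fun f o _ => st.2 f o) (fun _ _ => True).

Fixpoint stt sg (D : BAT sg) (s : sit sg) : state sg :=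
  match s with
  | S0 => ((fun r (o : {ffun 'I_(rar r) -> Obj sg}) => is_true (init D o)), (fun f o => 0))
  | Do a s' => let st := stt D s' in
      ((fun r (o : {ffun 'I_(rar r) -> Obj sg}) => eval (mstate st) s' (ssaR D r) (fun i => o i) (fun _ => a)),
       (fun f (o : {ffun 'I_(car f) -> Obj sg}) => match a with
                   | GWait t => st.2 f o + t
                   | GAct _ _ =>
                     if excluded_middle_informative
                          (eval (mstate st) s' (ssaC D f) (fun i => o i) (fun _ => a))
                     then 0 else st.2 f o
                   end))
  end.

Definition M0 sg (D : BAT sg) : model sg :=
  Model (fun r o s => (stt D s).1 r o) (fun f o s => (stt D s).2 f o)
    (fun a s => match a with
                | GWait _ => True
                | GAct A o => eval (mstate (stt D s)) s (poss D A) (fun i => o i) (@env0 _)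
                end).

Lemma eval_ext sg (M M' : model sg) s s' :
  (forall r o, Defs.Rint M (r:=r) o s <-> Defs.Rint M' o s') ->
  (forall f o, Cint M (f:=f) o s = Cint M' o s') ->
  forall n m (phi : Defs.form sg n m) eo ea, eval M s phi eo ea <-> eval M' s' phi eo ea.
Proof.
move=> HR HC n m phi; elim: phi => //=.
- by move=> n0 m0 p IH eo ea; split=> h h'; apply: h; apply/IH.
- move=> n0 m0 p IHp q IHq eo ea; split=> -[a b]; split.
  + exact/IHp. + exact/IHq. + exact/IHp. + exact/IHq.
- by move=> n0 m0 p IH eo ea; split=> -[o h]; exists o; apply/IH.
- by move=> n0 m0 p IH eo ea; split=> -[o h]; exists o; apply/IH.
- by move=> n0 m0 f args c v eo ea; rewrite HC.
Qed.

Lemma mstate_M0 sg (D : BAT sg) s n m (phi : Defs.form sg n m) eo ea :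
  eval (mstate (stt D s)) s phi eo ea <-> eval (M0 D) s phi eo ea.
Proof. by apply: eval_ext. Qed.

Lemma M0_model sg (D : BAT sg) : is_model D (M0 D).
Proof.
split; first by [].
split; first by [].
split; first by move=> A o s; apply: mstate_M0.
split; first by [].
split; first by move=> r o a s; apply: mstate_M0.
move=> f o a s; split.
- by move=> t ->.
- case: a => [t /(_ t) //|A rho _] /=.
  case: excluded_middle_informative => h; split=> // h'.
  + by exfalso; apply: h'; apply/mstate_M0.
  + by exfalso; apply: h; apply/mstate_M0.
Qed.

Lemma model_unique sg (D : BAT sg) M : is_model D M -> forall s,
  (forall r o, Defs.Rint M (r:=r) o s <-> Defs.Rint (M0 D) o s) /\
  (forall f o, Cint M (f:=f) o s = Cint (M0 D) o s).
Proof.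
case=> [H0 [HC0 [_ [_ [HR HC]]]]]; elim=> [|a s [IR IC]].
- by split=> [r o|f o]; [rewrite H0 | rewrite HC0].
- split=> [r o|f o].
  + rewrite HR /=; apply: eval_ext => //.
  + have [HW HA] := HC f o a s.
    case: a HW HA => [t HW _|A rho _ HA] /=; first by rewrite (HW t) // IC.
    have [h1 h2] := HA (fun t e => ltac:(discriminate e)).
    have E := eval_ext (M:=M) (M':=mstate (stt D s)) (s:=s) (s':=s) IR IC.
    case: excluded_middle_informative => h.
    * by apply: h1; apply/E.
    * rewrite h2 ?IC // => h'; apply: h; apply/E; exact: h'.
Qed.

Lemma entails_iff sg (D : BAT sg) s (phi : Defs.form sg 0 0) :
  entails D s phi <-> eval (M0 D) s phi (@env0 _) (@env0 _).
Proof.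
split; first by move/(_ _ (M0_model D)).
move=> h M HM; have [IR IC] := model_unique HM s.
by apply/(eval_ext IR IC).
Qed.

Lemma nu_iff sg (D : BAT sg) s w t : nu D s w t <-> Cint (M0 D) (projT2 w) s = t.
Proof.
split; first by move/(_ _ (M0_model D)).
by move=> h M HM; have [_ IC] := model_unique HM s; rewrite IC.
Qed.

Definition C0 sg (D : BAT sg) (s : sit sg) (w : clock_term sg) : time :=
  Cint (M0 D) (projT2 w) s.

Definition A' sg (D : BAT sg) K (s1 s2 : sit sg) : Prop :=
  ground_sit s1 /\ ground_sit s2 /\
  (forall r (o : {ffun 'I_(rar r) -> Obj sg}),
     Defs.Rint (M0 D) o s1 <-> Defs.Rint (M0 D) o s2) /\
  (forall w, IIK K (C0 D s1 w) (C0 D s2 w)) /\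
  (forall w w', fract K (C0 D s1 w) <= fract K (C0 D s1 w') <->
                fract K (C0 D s2 w) <= fract K (C0 D s2 w')).

Lemma approx_iff sg (D : BAT sg) K s1 s2 : approx D K s1 s2 <-> A' D K s1 s2.
Proof.
have Er : forall s r (rho : {ffun 'I_(rar r) -> Obj sg}),
    entails D s (@FRel sg 0 0 r (fun i => OCst 0 (rho i))) <-> Defs.Rint (M0 D) rho s.
  move=> s r rho; apply: iff_trans (entails_iff _ _ _) _ => /=.
  have -> : [ffun i => rho i] = rho by apply/ffunP => i; rewrite ffunE.
  exact: iff_refl.
split.
- case=> [g1 [g2 [HR [HS HF]]]]; split=> //; split=> //; split.
  + move=> r o; apply: iff_trans (iff_sym (Er _ _ _)) _.
    apply: iff_trans (HR r o) _; exact: Er.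
  split.
  + by move=> w; apply/simK_IIK; apply: HS; apply/nu_iff.
  + by move=> w w'; apply: HF; apply/nu_iff.
- case=> [g1 [g2 [HR [HS HF]]]]; split=> //; split=> //; split.
  + move=> r o; apply: iff_trans (Er _ _ _) _.
    apply: iff_trans (HR r o) _; exact: iff_sym (Er _ _ _).
  split.
  + move=> w t1 t2 /nu_iff <- /nu_iff <-; apply/simK_IIK; exact: HS.
  + by move=> w w' t1 t1' t2 t2' /nu_iff <- /nu_iff <- /nu_iff <- /nu_iff <-; apply: HF.
Qed.

Lemma cmp_IIK K u u' c (v : nat) : IIK K u u' -> (v <= K)%N ->
  (cmpR c u v%:R <-> cmpR c u' v%:R).
Proof.
move=> H hv; have := H (v%:Z); rewrite -natRz ler_nat => /(_ hv) [[a1 a2] [b1 b2]].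
by case: c => /=; split=> h; lra.
Qed.

Lemma eval_transfer sg K (M M' : model sg) s s' (pi : gaction sg -> gaction sg) :
  (forall r o, Defs.Rint M (r:=r) o s <-> Defs.Rint M' o s') ->
  (forall f o, IIK K (Cint M (f:=f) o s) (Cint M' o s')) ->
  injective pi -> (forall a', exists a, pi a = a') ->
  (forall A (o : {ffun 'I_(aar A) -> Obj sg}), pi (GAct o) = GAct o) ->
  forall n m (phi : Defs.form sg n m), consts_le K phi -> forall eo ea ea',
   (forall i, ea' i = pi (ea i)) -> (eval M s phi eo ea <-> eval M' s' phi eo ea').
Proof.
move=> HR HC pinj psur pA n m phi; elim: phi => /=.
- by move=> *; exact: iff_refl.
- move=> n0 m0 p IH hK eo ea ea' he; have E := IH hK eo ea ea' he.
  by split=> h h'; apply: h; apply/E.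
- move=> n0 m0 p IHp q IHq /andP [hp hq] eo ea ea' he.
  have Ep := IHp hp eo ea ea' he; have Eq := IHq hq eo ea ea' he.
  by split=> -[a b]; split; [apply/Ep | apply/Eq | apply/Ep | apply/Eq].
- move=> n0 m0 p IH hK eo ea ea' he.
  by split=> -[o h]; exists o; apply/(IH hK _ ea ea' he).
- move=> n0 m0 p IH hK eo ea ea' he.
  have he2 : forall a i, ext_env ea' (pi a) i = pi (ext_env ea a i).
    by move=> a i; rewrite /ext_env; case: (unlift ord0 i) => [j|] //=.
  split.
  + by case=> a h; exists (pi a); apply/(IH hK eo _ _ (he2 a)).
  + case=> a' h; have [a ea_] := psur a'; subst a'.
    by exists a; apply/(IH hK eo _ _ (he2 a)).
- by move=> *; exact: iff_refl.
- move=> n0 m0 t t' _ eo ea ea' he.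
  have E : forall t, eval_at eo ea' t = pi (eval_at eo ea t).
    by case=> [j|A args] /=; [exact: he | rewrite pA].
  by rewrite !E; split=> [->//|]; exact: pinj.
- by move=> n0 m0 r args _ eo ea ea' he; exact: HR.
- by move=> n0 m0 f args c v hv eo ea ea' he; exact: cmp_IIK (HC f _) hv.
- by move=> *; exact: iff_refl.
Qed.

Lemma region_reset (C : Type) K (x y x' y' : C -> time) :
  (forall c, IIK K (x c) (y c)) ->
  (forall c c', fract K (x c) <= fract K (x c') <-> fract K (y c) <= fract K (y c')) ->
  (forall c, (x' c = 0 /\ y' c = 0) \/ (x' c = x c /\ y' c = y c)) ->
  (forall c, IIK K (x' c) (y' c)) /\
  (forall c c', fract K (x' c) <= fract K (x' c') <-> fract K (y' c) <= fract K (y' c')).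
Proof.
move=> HS HF HZ.
have f0 : fract K 0 = 0 by rewrite /fract ler0n floor0 mulr0z subr0.
split.
- move=> c; have [[hx hy]|[hx hy]] := HZ c; rewrite hx hy; last exact: HS.
  by move=> k hk; split; exact: iff_refl.
- move=> c c'; have [[hx hy]|[hx hy]] := HZ c; have [[hx' hy']|[hx' hy']] := HZ c';
    rewrite hx hy hx' hy'.
  + by rewrite f0; exact: iff_refl.
  + by rewrite f0; split=> _; exact: fract_ge0.
  + rewrite f0; have := fract_zero (HS c); have := fract_ge0 K (x c).
    have := fract_ge0 K (y c); lra.
  + exact: HF.
Qed.

Definition swapw sg (t1 t2 : time) (a : gaction sg) : gaction sg :=
  match a with
  | GWait t => GWait sg (if t == t1 then t2 else if t == t2 then t1 else t)
  | GAct _ o => GAct o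
  end.

Lemma swapwK sg t1 t2 : involutive (@swapw sg t1 t2).
Proof.
case=> [t|A o] //=; congr GWait.
case: (eqVneq t t1) => [->|n1] /=.
  by case: (eqVneq t2 t1) => [->|n2]; rewrite ?eqxx // (negbTE n2).
case: (eqVneq t t2) => [->|n2] /=; first by rewrite eqxx.
by rewrite (negbTE n1) (negbTE n2).
Qed.

Theorem theorem6 (sg : signature) (D : BAT sg) (K : nat) :
  bat_consts_le D K -> time_abstract_bisim D K (approx D K).
Proof.
move=> [HKp [HKr HKc]].
have AE := @approx_iff sg D K.
split; first by move=> s1 s2 /AE [g1 [g2 _]].
split.
  by move=> s gs; apply/AE; split=> //.
split.
  move=> s1 s2 /AE [g1 [g2 [HR [HS HF]]]]; apply/AE; split=> //; split=> //; split.
    by move=> r o; exact: iff_sym (HR r o).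
  split; last by move=> w w'; exact: iff_sym (HF w w').
  by move=> w k hk; have [a b] := HS w k hk; split; exact: iff_sym.
split.
  move=> s1 s2 s3 /AE [g1 [g2 [HR [HS HF]]]] /AE [_ [g3 [HR' [HS' HF']]]].
  apply/AE; split=> //; split=> //; split.
    by move=> r o; exact: iff_trans (HR r o) (HR' r o).
  split; last by move=> w w'; exact: iff_trans (HF w w') (HF' w w').
  move=> w k hk; have [a b] := HS w k hk; have [a' b'] := HS' w k hk.
  by split; [exact: iff_trans a a' | exact: iff_trans b b'].
move=> s1 s2 /AE [g1 [g2 [HR [HS HF]]]].
have HC : forall f (o : {ffun 'I_(car f) -> Obj sg}),
    IIK K (Cint (M0 D) o s1) (Cint (M0 D) o s2).
  by move=> f o; exact: (HS (existT _ f o)).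
split.
  move=> phi hphi; apply: iff_trans (entails_iff _ _ _) _.
  apply: iff_trans _ (iff_sym (entails_iff _ _ _)).
  apply: (eval_transfer (pi := id) HR HC) => //.
  by move=> a; exists a.
split.
  move=> A rho; apply/AE; split=> //; split=> //.
  have TR : forall (M1 M2 : model sg) n m (phi : Defs.form sg n m) eo ea,
      M1 = mstate (stt D s1) -> M2 = mstate (stt D s2) -> consts_le K phi ->
      eval M1 s1 phi eo ea <-> eval M2 s2 phi eo ea.
    move=> M1 M2 n m phi eo ea -> -> hK.
    by apply: (eval_transfer (M := mstate (stt D s1)) (M' := mstate (stt D s2)) (pi := id) HR HC) => // a; exists a.
  split.
    by move=> r o /=; apply: TR => //; exact: HKr.
  apply: (region_reset (x' := C0 D (Do (GAct rho) s1)) (y' := C0 D (Do (GAct rho) s2)) HS HF).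
  move=> [f o]; rewrite /C0 /=.
  have := TR _ _ _ _ (ssaC D f) (fun i => o i) (fun=> GAct rho) erefl erefl (HKc f).
  case: excluded_middle_informative => h1; case: excluded_middle_informative => h2 E.
  + by left.
  + by exfalso; apply: h2; apply/E.
  + by exfalso; apply: h1; apply/E.
  + by right.
move=> t1 t10.
have [t2 [t20 [NS NF]]] := region_wait HS HF t10.
exists t2; split=> //; apply/AE; split; first by split.
split; first by split.
split; last by split.
move=> r o /=.
apply: (eval_transfer (M := mstate (stt D s1)) (M' := mstate (stt D s2)) (pi := swapw t1 t2) HR HC) => //.
- exact: can_inj (@swapwK sg t1 t2).
- by move=> a; exists (swapw t1 t2 a); exact: swapwK.
- by move=> i /=; rewrite eqxx.
Qed.
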